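(* Let $L\in R[x][\partial]$ have positive order $r$ and let $k\ge r$. Then $R[x][\partial]\cdot M_k(L)=R[x][\partial]\cdot M_{k+1}(L)$ if and only if $\sigma(I_k)=I_{k+1}$.
   Context: $R$ is a principal ideal domain with quotient field $Q_R$; $\sigma$ is an $R$-automorphism of $R[x]$ with $\sigma(x)=\gamma x+\tau$ ($\gamma,\tau\in R$, $\gamma$ a unit), $\delta$ an $R$-linear $\sigma$-derivation with $\deg\delta(x)\le 1$; $R[x][\partial]$ is the Ore algebra with $\partial p=\sigma(p)\partial+\delta(p)$, inside $Q_R(x)[\partial]$. $\mathrm{cont}(L)=Q_R(x)[\partial]L\cap R[x][\partial]$; $M_k(L)=\{P\in\mathrm{cont}(L):\deg_\partial P\le k\}$; $I_k=\{[\partial^k]P:P\in M_k(L)\}\cup\{0\}$, an ideal of $R[x]$, where $[\partial^k]P$ is the coefficient of $\partial^k$ in $P$. $R[x][\partial]\cdot S$ denotes the left ideal generated by $S$, and $\sigma(I_k)=\{\sigma(f):f\in I_k\}$. *)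

(* Defs.v *)
From HB Require Import structures.
From mathcomp Require Import all_boot all_order all_algebra.
Set Implicit Arguments. Unset Strict Implicit. Unset Printing Implicit Defensive.
Import GRing.Theory.
Local Open Scope ring_scope.

Definition is_ideal (R : comRingType) (I : R -> Prop) : Prop :=
  [/\ I 0, (forall a b, I a -> I b -> I (a + b)) & (forall c a, I a -> I (c * a))].

Definition is_PID (R : idomainType) : Prop :=
  forall I : R -> Prop, is_ideal I -> exists g : R, forall a, I a <-> exists c, a = c * g.

(* Elements of K[\partial] are represented as {poly K}: P = \sum_i P`_i \partial^i.
   Multiplication rule: \partial * q = s q \partial + d q. *)
Definition ore_dl (K : comRingType) (s d : K -> K) (Q : {poly K}) : {poly K} :=
  'X * map_poly s Q + map_poly d Q.

(* left multiplication by \partial^i is iter i (ore_dl s d);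
   P * Q = \sum_i P`_i (\partial^i Q) *)
Definition ore_mul (K : comRingType) (s d : K -> K) (P Q : {poly K}) : {poly K} :=
  \sum_(i < size P) P`_i *: iter i (ore_dl s d) Q.

Definition sigmaR (R : comRingType) (gamma tau : R) (p : {poly R}) : {poly R} :=
  p \Po (gamma *: 'X + tau%:P).

Definition is_sigma_derivation (K : comRingType) (s d : K -> K) : Prop :=
  (forall a b, d (a + b) = d a + d b) /\ (forall a b, d (a * b) = s a * d b + d a * b).

Section Setting.
Variable R : idomainType.
Local Notation RX := {poly R}.
Local Notation QX := {fraction {poly R}}.
Local Notation emb := (@FracField.tofrac {poly R}).

Variables (s : RX -> RX) (d : RX -> RX) (sQ dQ : QX -> QX).

Definition embO (P : {poly RX}) : {poly QX} := map_poly emb P.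

Definition cont (L P : {poly RX}) : Prop :=
  exists Q : {poly QX}, embO P = ore_mul sQ dQ Q (embO L).

Definition Mk (L : {poly RX}) (k : nat) (P : {poly RX}) : Prop :=
  cont L P /\ (size P <= k.+1)%N.

Definition Ik (L : {poly RX}) (k : nat) (f : RX) : Prop :=
  (exists P, Mk L k P /\ P`_k = f) \/ f = 0.

Definition left_ideal_gen (S : {poly RX} -> Prop) (P : {poly RX}) : Prop :=
  exists t : seq ({poly RX} * {poly RX}),
    (forall u, u \in t -> S u.2) /\ P = \sum_(u <- t) ore_mul s d u.1 u.2.
End Setting.

(* Main.v *)
Require Import Defs.
From HB Require Import structures.
From mathcomp Require Import all_boot all_order all_algebra.
From mathcomp Require Import ring.
Import GRing.Theory.
Local Open Scope ring_scope.


Record ore_ok {K : comNzRingType} (s d : K -> K) : Prop := OreOk {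
  ok_s0 : s 0 = 0;
  ok_sD : forall a b, s (a + b) = s a + s b;
  ok_sM : forall a b, s (a * b) = s a * s b;
  ok_d0 : d 0 = 0;
  ok_dD : forall a b, d (a + b) = d a + d b;
  ok_dM : forall a b, d (a * b) = s a * d b + d a * b }.

Section Gen.
Variable K : comNzRingType.
Variables (s d : K -> K).
Hypothesis Hsd : @ore_ok K s d.
Let s0 := @ok_s0 K s d Hsd.
Let sD := @ok_sD K s d Hsd.
Let sM := @ok_sM K s d Hsd.
Let d0 := @ok_d0 K s d Hsd.
Let dD := @ok_dD K s d Hsd.
Let dM := @ok_dM K s d Hsd.

Local Notation dl := (ore_dl s d).
Local Notation om := (ore_mul s d).

Lemma coef_dl (Q : {poly K}) j : (dl Q)`_j = (if j == 0%N then 0 else s Q`_j.-1) + d Q`_j.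
Proof using Hsd. by rewrite /ore_dl coefD coefXM !coef_map_id0. Qed.

Lemma map_polyDf (f : K -> K) (A B : {poly K}) : f 0 = 0 ->
  (forall a b, f (a + b) = f a + f b) ->
  map_poly f (A + B) = map_poly f A + map_poly f B.
Proof using Hsd. by move=> f0 fD; apply/polyP=> i; rewrite coefD !coef_map_id0 // coefD fD. Qed.

Lemma dlD (A B : {poly K}) : dl (A + B) = dl A + dl B.
Proof using Hsd.
rewrite /ore_dl (map_polyDf _ _ _ s0 sD) (map_polyDf _ _ _ d0 dD) mulrDr.
by rewrite -!addrA; congr (_ + _); rewrite addrCA.
Qed.

Lemma dl0 : dl 0 = 0.
Proof using Hsd. by rewrite /ore_dl !map_poly0 mulr0 addr0. Qed.

Lemma iter_dlD i (A B : {poly K}) : iter i dl (A + B) = iter i dl A + iter i dl B.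
Proof using Hsd. by elim: i => //= i ->; rewrite dlD. Qed.

Lemma iter_dl0 i : iter i dl 0 = 0.
Proof using Hsd. by elim: i => //= i ->; rewrite dl0. Qed.

Lemma dlZ c (Y : {poly K}) : dl (c *: Y) = s c *: dl Y + d c *: Y.
Proof using Hsd.
apply/polyP=> j; rewrite coef_dl [RHS]coefD !coefZ coef_dl.
case: (j == 0%N); rewrite ?sM dM; ring.
Qed.

Lemma size_dl (Q : {poly K}) : (size (dl Q) <= (size Q).+1)%N.
Proof using Hsd.
apply/leq_sizeP=> j hj; rewrite coef_dl.
have -> : Q`_j = 0 by apply: nth_default; apply: leq_trans hj; exact: leqnSn.
case: j hj => // j hj /=; rewrite nth_default // d0 s0; ring.
Qed.

Lemma om_bound (Q X : {poly K}) n : (size Q <= n)%N ->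
  om Q X = \sum_(i < n) Q`_i *: iter i dl X.
Proof using Hsd.
move=> h; rewrite /ore_mul -(subnKC h).
elim: (n - size Q)%N => [|j IH]; first by rewrite addn0.
by rewrite addnS big_ord_recr /= IH nth_default ?leq_addr // scale0r addr0.
Qed.

Lemma omD_l (Q1 Q2 X : {poly K}) : om (Q1 + Q2) X = om Q1 X + om Q2 X.
Proof using Hsd.
pose n := (size Q1 + size Q2)%N.
rewrite (om_bound _ X _ (_ : (size (Q1 + Q2)%R <= n)%N)); last first.
  apply: leq_trans (size_polyD _ _) _; rewrite geq_max leq_addr leq_addl //.
rewrite (om_bound _ X _ (_ : (size Q1 <= n)%N)) ?leq_addr //.
rewrite (om_bound _ X _ (_ : (size Q2 <= n)%N)) ?leq_addl //.
by rewrite -big_split /=; apply: eq_bigr => i _; rewrite coefD scalerDl.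
Qed.

Lemma omZ_l c (Q X : {poly K}) : om (c *: Q) X = c *: om Q X.
Proof using Hsd.
rewrite (om_bound _ X _ (size_scale_leq c Q)) (om_bound _ X _ (leqnn _)) scaler_sumr.
by apply: eq_bigr => i _; rewrite coefZ scalerA.
Qed.

Lemma omD_r (A X Y : {poly K}) : om A (X + Y) = om A X + om A Y.
Proof using Hsd. by rewrite /ore_mul -big_split; apply: eq_bigr => i _; rewrite iter_dlD scalerDr. Qed.

Lemma om0_l (X : {poly K}) : om 0 X = 0.
Proof using Hsd. by rewrite /ore_mul size_poly0 big_ord0. Qed.

Lemma om1 (P : {poly K}) : om 1 P = P.
Proof using Hsd. by rewrite /ore_mul size_poly1 big_ord1 /= coef1 scale1r. Qed.

Lemma dl_sum n (F : 'I_n -> {poly K}) : dl (\sum_(i < n) F i) = \sum_(i < n) dl (F i).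
Proof using Hsd. by apply: (big_morph _ dlD dl0). Qed.

Lemma om_dl (Q X : {poly K}) : dl (om Q X) = om (dl Q) X.
Proof using Hsd.
rewrite (om_bound _ X _ (size_dl Q)) (om_bound _ X _ (leqnn _)) dl_sum.
under eq_bigr do rewrite dlZ.
rewrite big_split /=.
under [in RHS]eq_bigr do rewrite coef_dl scalerDl.
rewrite big_split /= big_ord_recl /= scale0r add0r.
rewrite [X in _ = _ + X]big_ord_recr /= [(Q`_ (size Q))]nth_default // d0 scale0r addr0.
congr (_ + _); apply: eq_bigr => i _ //.
Qed.

Lemma om_mulX (A Q : {poly K}) : om (A * 'X) Q = om A (dl Q).
Proof using Hsd.
have h : (size (A * 'X)%R <= (size A).+1)%N.
  apply/leq_sizeP=> j hj; rewrite coefMX; case: j hj => //= j hj.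
  by rewrite nth_default.
rewrite (om_bound _ Q _ h) big_ord_recl coefMX /= scale0r add0r /ore_mul.
apply: eq_bigr => i _; rewrite coefMX /bump /= add0n -iterS iterSr //.
Qed.

Lemma iter_dl_size (Q : {poly K}) n i : (size Q <= n.+1)%N ->
  (size (iter i dl Q) <= n.+1 + i)%N /\ (iter i dl Q)`_(n + i) = iter i s Q`_n.
Proof using Hsd.
move=> hQ; elim: i => [|i [IH1 IH2]]; first by rewrite !addn0; split.
split.
  rewrite /= addnS; apply: leq_trans (size_dl _) _; by [].
rewrite /= coef_dl addnS /= IH2 [(iter i dl Q)`_(n + i).+1]nth_default ?d0 ?addr0 //.
Qed.

End Gen.
Arguments coef_dl {K s d}.
Arguments map_polyDf {K s d}.
Arguments dlD {K s d}.
Arguments dl0 {K s d}.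
Arguments iter_dlD {K s d}.
Arguments iter_dl0 {K s d}.
Arguments dlZ {K s d}.
Arguments size_dl {K s d}.
Arguments om_bound {K s d}.
Arguments omD_l {K s d}.
Arguments omZ_l {K s d}.
Arguments omD_r {K s d}.
Arguments om0_l {K s d}.
Arguments om1 {K s d}.
Arguments dl_sum {K s d}.
Arguments om_dl {K s d}.
Arguments om_mulX {K s d}.
Arguments iter_dl_size {K s d}.



Section Main.
Variable R : idomainType.
Variables (gamma tau : R).
Hypothesis Hgamma : gamma \is a GRing.unit.
Variable delta : {poly R} -> {poly R}.
Hypothesis Hdelta_der : is_sigma_derivation (sigmaR gamma tau) delta.
Variables sigQ delQ : {fraction {poly R}} -> {fraction {poly R}}.
Hypothesis HsigQ_rmorph : zmod_morphism sigQ /\ monoid_morphism sigQ.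
Hypothesis HsigQ_ext : forall p : {poly R},
      sigQ (FracField.tofrac p) = FracField.tofrac (sigmaR gamma tau p).
Hypothesis HdelQ_der : is_sigma_derivation sigQ delQ.
Hypothesis HdelQ_ext : forall p : {poly R},
      delQ (FracField.tofrac p) = FracField.tofrac (delta p).
Variable L : {poly {poly R}}.

Local Notation s := (sigmaR gamma tau).
Local Notation emb := (@FracField.tofrac {poly R}).
Local Notation dl := (ore_dl s delta).
Local Notation om := (ore_mul s delta).
Local Notation dlQ := (ore_dl sigQ delQ).
Local Notation omQ := (ore_mul sigQ delQ).
Local Notation C := (cont sigQ delQ L).

Definition sinv (p : {poly R}) := p \Po (gamma^-1 *: ('X - tau%:P)).

Lemma s_sinv p : s (sinv p) = p.
Proof.
rewrite /sigmaR /sinv -comp_polyA comp_polyZ comp_polyB comp_polyX comp_polyC.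
by rewrite addrK scalerA mulVr // scale1r comp_polyXr.
Qed.

Lemma sinv_s p : sinv (s p) = p.
Proof.
rewrite /sigmaR /sinv -comp_polyA comp_polyD comp_polyZ comp_polyX comp_polyC.
by rewrite scalerA mulrV // scale1r subrK comp_polyXr.
Qed.

Lemma s_inj p : s p = 0 -> p = 0.
Proof. by move=> h; rewrite -(sinv_s p) h /sinv comp_poly0. Qed.

Lemma iter_s_inj i p : iter i (fun q => s q) p = 0 -> p = 0.
Proof. by elim: i => //= i IH /s_inj /IH. Qed.

Lemma okR : ore_ok s delta.
Proof.
case: Hdelta_der => dD dM.
have d0 : delta 0 = 0.
  have h := dD 0 0; rewrite addr0 -{1}(addr0 (delta 0)) in h.
  exact: esym (addrI _ h).
split => //.
- by rewrite /sigmaR comp_poly0.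
- by move=> a b; rewrite /sigmaR comp_polyD.
- by move=> a b; rewrite /sigmaR comp_polyM.
Qed.

Lemma okQ : ore_ok sigQ delQ.
Proof.
case: HsigQ_rmorph => zm [_ mm].
case: HdelQ_der => dD dM.
have s0 : sigQ 0 = 0 by move: (zm 0 0); rewrite !subrr.
have sN : forall b, sigQ (- b) = - sigQ b.
  by move=> b; move: (zm 0 b); rewrite !sub0r s0 sub0r.
have d0 : delQ 0 = 0.
  have h := dD 0 0; rewrite addr0 -{1}(addr0 (delQ 0)) in h.
  exact: esym (addrI _ h).
split => //.
by move=> a b; move: (zm a (- b)); rewrite opprK sN opprK.
Qed.

Lemma embO_dl (P : {poly {poly R}}) : embO (dl P) = dlQ (embO P).
Proof.
apply/polyP => j; rewrite /embO coef_map (coef_dl okQ) !coef_map (coef_dl okR).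
rewrite raddfD /= HsigQ_ext HdelQ_ext; case: (j == 0%N) => //; by rewrite raddf0.
Qed.

Lemma embOZ (b : {poly R}) (P : {poly {poly R}}) : embO (b *: P) = emb b *: embO P.
Proof. by apply/polyP => j; rewrite /embO coefZ !coef_map_id0 ?rmorph0 // coefZ rmorphM. Qed.

Lemma embOD (P1 P2 : {poly {poly R}}) : embO (P1 + P2) = embO P1 + embO P2.
Proof. by apply/polyP => j; rewrite /embO coefD !coef_map_id0 ?rmorph0 // coefD rmorphD. Qed.

Lemma cont0 : C 0.
Proof. by exists 0; rewrite /embO map_poly0 (om0_l okQ). Qed.

Lemma contD (P1 P2 : {poly {poly R}}) : C P1 -> C P2 -> C (P1 + P2).
Proof. by move=> [Q1 e1] [Q2 e2]; exists (Q1 + Q2); rewrite embOD e1 e2 (omD_l okQ). Qed.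

Lemma contZ (b : {poly R}) (P : {poly {poly R}}) : C P -> C (b *: P).
Proof. by move=> [Q e]; exists (emb b *: Q); rewrite embOZ e (omZ_l okQ). Qed.

Lemma contdl (P : {poly {poly R}}) : C P -> C (dl P).
Proof. by move=> [Q e]; exists (dlQ Q); rewrite embO_dl e (om_dl okQ). Qed.

Lemma contN (P : {poly {poly R}}) : C P -> C (- P).
Proof. by move=> h; rewrite -scaleN1r; apply: contZ. Qed.

Variable k : nat.
Local Notation M := (Mk sigQ delQ L k).
Local Notation RX := {poly {poly R}}.

Lemma M0 : M 0.
Proof. by split; [exact: cont0 | rewrite size_poly0]. Qed.

Lemma MD (P1 P2 : RX) : M P1 -> M P2 -> M (P1 + P2).
Proof.
move=> [c1 s1] [c2 s2]; split; first exact: contD.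
by apply: leq_trans (size_polyD _ _) _; rewrite geq_max s1 s2.
Qed.

Lemma MZ (b : {poly R}) (P : RX) : M P -> M (b *: P).
Proof.
by move=> [c1 s1]; split; [exact: contZ | exact: leq_trans (size_scale_leq _ _) s1].
Qed.

Definition RFS (P : RX) := exists F : nat -> RX, (forall i, M (F i)) /\
  exists m, (forall i, (m <= i)%N -> F i = 0) /\ P = \sum_(i < m) iter i dl (F i).

Lemma sum_ext (F : nat -> RX) m m' : (forall i, (m <= i)%N -> F i = 0) -> (m <= m')%N ->
  \sum_(i < m') iter i dl (F i) = \sum_(i < m) iter i dl (F i).
Proof.
move=> hF hm; rewrite -(subnKC hm).
elim: (m' - m)%N => [|j IH]; first by rewrite addn0.
by rewrite addnS big_ord_recr /= IH hF ?leq_addr // (iter_dl0 okR) addr0.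
Qed.

Lemma RFS0 : RFS 0.
Proof.
exists (fun _ => 0); split; first by move=> _; exact: M0.
by exists 0%N; split => //; rewrite big_ord0.
Qed.

Lemma RFSM (Q : RX) : M Q -> RFS Q.
Proof.
move=> hQ; exists (fun i => if i == 0%N then Q else 0); split.
  by move=> i; case: (i == 0%N) => //; exact: M0.
exists 1%N; split; first by case.
by rewrite big_ord1.
Qed.

Lemma RFSD (P1 P2 : RX) : RFS P1 -> RFS P2 -> RFS (P1 + P2).
Proof.
move=> [F1 [hF1 [m1 [z1 e1]]]] [F2 [hF2 [m2 [z2 e2]]]].
exists (fun i => F1 i + F2 i); split; first by move=> i; apply: MD.
exists (m1 + m2)%N; split.
  move=> i hi; rewrite z1 ?z2 ?addr0 //; apply: leq_trans hi; [exact: leq_addl | exact: leq_addr].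
under eq_bigr do rewrite (iter_dlD okR).
rewrite big_split /= (sum_ext _ _ _ z1 (leq_addr _ _)) (sum_ext _ _ _ z2 (leq_addl _ _)).
by rewrite e1 e2.
Qed.

Lemma RFS_dl (P : RX) : RFS P -> RFS (dl P).
Proof.
move=> [F [hF [m [z e]]]].
exists (fun i => if i is j.+1 then F j else 0); split.
  by case => [|i] //; exact: M0.
exists m.+1; split; first by case => // i hi; apply: z.
rewrite big_ord_recl /= add0r e (dl_sum okR).
by apply: eq_bigr => i _.
Qed.

Lemma RFS_Z_iter i (Q : RX) : M Q -> forall b : {poly R}, RFS (b *: iter i dl Q).
Proof.
move=> hQ; elim: i => [|i IH] b; first by apply: RFSM; apply: MZ.
have -> : b *: iter i.+1 dl Q = dl (sinv b *: iter i dl Q) + (- delta (sinv b)) *: iter i dl Q.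
  by rewrite (dlZ okR) s_sinv scaleNr addrK.
by apply: RFSD; [apply: RFS_dl; apply: IH | apply: IH].
Qed.

Lemma RFS_om (A Q : RX) : M Q -> RFS (om A Q).
Proof.
move=> hQ; rewrite /ore_mul.
apply: (big_ind RFS RFS0 RFSD) => i _; exact: RFS_Z_iter.
Qed.

Lemma RFS_gen (P : RX) : left_ideal_gen s delta M P -> RFS P.
Proof.
move=> [t [ht ->]]; rewrite big_seq.
apply: (big_ind RFS RFS0 RFSD) => u hu; apply: RFS_om; exact: ht.
Qed.

Lemma itF_eq (F : nat -> RX) n : \sum_(i < n.+2) iter i dl (F i) =
  \sum_(i < n.+1) iter i dl (F i) + iter n.+1 dl (F n.+1).
Proof. by rewrite big_ord_recr. Qed.

Lemma key n (F : nat -> RX) : (forall i, M (F i)) ->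
  (size (\sum_(i < n.+2) iter i dl (F i))%R <= k.+2)%N ->
  exists g, Ik sigQ delQ L k g /\ (\sum_(i < n.+2) iter i dl (F i))`_k.+1 = s g.
Proof.
elim: n F => [|n IH] F hF hs.
  exists (F 1%N)`_k; split; first by left; exists (F 1%N).
  rewrite !big_ord_recl big_ord0 /= addr0 coefD (coef_dl okR) /bump /=.
  case: (hF 0%N) => _ h0; case: (hF 1%N) => _ h1.
  by rewrite [(F 0%N)`_k.+1]nth_default // [(F 1%N)`_k.+1]nth_default // (@ok_d0 _ _ _ okR) addr0 add0r.
have hFk : (F n.+2)`_k = 0.
  apply: (iter_s_inj n.+2).
  have [_ <-] := iter_dl_size okR _ k n.+2 (proj2 (hF n.+2)).
  move: (hs); rewrite big_ord_recr /= => hs'.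
  have : (\sum_(i < n.+3) iter i dl (F i))`_(k + n.+2) = 0.
    by rewrite nth_default //; apply: leq_trans hs _; rewrite -addn2 leq_add2l.
  rewrite big_ord_recr /= coefD coef_sum big1 ?add0r // => i _.
  have [h1 _] := iter_dl_size okR _ k i (proj2 (hF i)).
  rewrite nth_default //; apply: leq_trans h1 _.
  by rewrite addSn -addnS leq_add2l.
have hsz : (size (F n.+2) <= k)%N.
  apply/leq_sizeP => j; rewrite leq_eqVlt => /orP [/eqP <- // | hj].
  by rewrite nth_default //; apply: leq_trans (proj2 (hF n.+2)) hj.
pose F' := fun i => if i == n.+1 then F i + dl (F n.+2) else F i.
have hF' : forall i, M (F' i).
  move=> i; rewrite /F'; case: (i == n.+1); last exact: hF.
  apply: MD; first exact: hF.
  split; first by apply: contdl; exact: (proj1 (hF n.+2)).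
  by apply: leq_trans (size_dl okR _) _.
have e : \sum_(i < n.+3) iter i dl (F i) = \sum_(i < n.+2) iter i dl (F' i).
  rewrite (itF_eq F n.+1) (itF_eq F n) (itF_eq F' n).
  have hF'n : F' n.+1 = F n.+1 + dl (F n.+2) by rewrite /F' eqxx.
  rewrite hF'n (iter_dlD okR) -(iterSr n.+1) [RHS]addrA.
  congr (_ + _ + _).
  by apply: eq_bigr => i _; rewrite /F' ltn_eqF.
rewrite e; apply: IH => //; by rewrite -e.
Qed.

Lemma lift_gen : (forall f : {poly R},
     (exists g, Ik sigQ delQ L k g /\ f = s g) <-> Ik sigQ delQ L k.+1 f) ->
  forall t : seq (RX * RX), (forall u, u \in t -> Mk sigQ delQ L k.+1 u.2) ->
  exists t' : seq (RX * RX), (forall u, u \in t' -> M u.2) /\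
    \sum_(u <- t) om u.1 u.2 = \sum_(u <- t') om u.1 u.2.
Proof.
move=> H; elim => [|u t IH] ht; first by exists [::].
have [t' [ht' et']] : exists t' : seq (RX * RX), (forall u, u \in t' -> M u.2) /\
    \sum_(u <- t) om u.1 u.2 = \sum_(u <- t') om u.1 u.2.
  by apply: IH => v hv; apply: ht; rewrite inE hv orbT.
have hu := ht u (mem_head _ _).
have [g [hg eg]] : exists g, Ik sigQ delQ L k g /\ u.2`_k.+1 = s g.
  by apply/H; left; exists u.2.
have [Q [hQ eQ]] : exists Q, M Q /\ Q`_k = g.
  case: hg => [[Q [hQ eQ]] | ->]; first by exists Q.
  by exists 0; split; [exact: M0 | rewrite coef0].
case: hu => cu su; case: (hQ) => cQ sQ.
exists ((u.1, u.2 - dl Q) :: (u.1 * 'X, Q) :: t'); split.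
  move=> v; rewrite !inE => /orP [/eqP -> /= | /orP [/eqP -> //= | /ht' //]].
  split; first by apply: contD => //; apply: contN; apply: contdl.
  apply/leq_sizeP => j; rewrite leq_eqVlt => /orP [/eqP <- | hj].
    rewrite coefB (coef_dl okR) /= eQ -eg [Q`_k.+1]nth_default // (@ok_d0 _ _ _ okR).
    by rewrite addr0 subrr.
  have h1 : (size u.2 <= j)%N by apply: leq_trans su hj.
  have h2 : (size (dl Q) <= j)%N.
    by apply: leq_trans (size_dl okR _) _; apply: leq_trans hj; apply: leq_trans sQ _.
  by rewrite coefB !nth_default ?subr0.
rewrite !big_cons et' /= (om_mulX okR) addrA -(omD_r okR) subrK //.
Qed.

Lemma main_sec : (forall P, left_ideal_gen s delta M P <->
             left_ideal_gen s delta (Mk sigQ delQ L k.+1) P)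
  <->
  (forall f : {poly R},
     (exists g, Ik sigQ delQ L k g /\ f = s g) <-> Ik sigQ delQ L k.+1 f).
Proof.
have s0 : s 0 = 0 by rewrite /sigmaR comp_poly0.
split.
- move=> H f; split.
  + move=> [g [hg ->]]; case: hg => [[Q [[cQ sQ] <-]] | ->]; last by right.
    left; exists (dl Q); split.
      split; [exact: contdl | exact: leq_trans (size_dl okR _) _].
    by rewrite (coef_dl okR) /= [Q`_k.+1]nth_default // (@ok_d0 _ _ _ okR) addr0.
  + case => [[P [hP <-]] | ->]; last by exists 0; split => //; right.
    have : left_ideal_gen s delta (Mk sigQ delQ L k.+1) P.
      exists [:: (1, P)]; split.
        by move=> u; rewrite inE => /eqP ->.
      by rewrite big_cons big_nil addr0 (om1 okR).
    move/H/RFS_gen => [F [hF [m [z e]]]].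
    have := @key m F hF.
    have hm : (m <= m.+2)%N by rewrite leqW.
    rewrite !(sum_ext _ _ _ z hm) -e.
    by apply; case: hP.
- move=> H P; split.
  + move=> [t [ht ->]]; exists t; split => // u /ht [c hs]; split => //.
    exact: leqW.
  + move=> [t [ht ->]].
    have [t' [ht' ->]] := lift_gen H _ ht.
    by exists t'.
Qed.

End Main.


Theorem mainTheorem13
  (R : idomainType) (HPID : is_PID R)
  (gamma tau : R) (Hgamma : gamma \is a GRing.unit)
  (delta : {poly R} -> {poly R})
  (Hdelta_der : is_sigma_derivation (sigmaR gamma tau) delta)
  (Hdelta_lin : forall (c : R) (p : {poly R}), delta (c *: p) = c *: delta p)
  (Hdelta_x : (size (delta 'X) <= 2)%N)
  (* extensions of sigma and delta to Q_R(x) *)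
  (sigQ delQ : {fraction {poly R}} -> {fraction {poly R}})
  (HsigQ_rmorph : zmod_morphism sigQ /\ monoid_morphism sigQ)
  (HsigQ_ext : forall p : {poly R},
      sigQ (FracField.tofrac p) = FracField.tofrac (sigmaR gamma tau p))
  (HdelQ_der : is_sigma_derivation sigQ delQ)
  (HdelQ_ext : forall p : {poly R},
      delQ (FracField.tofrac p) = FracField.tofrac (delta p))
  (L : {poly {poly R}}) (HL : (0 < (size L).-1)%N)
  (k : nat) (Hk : ((size L).-1 <= k)%N) :
  (forall P, left_ideal_gen (sigmaR gamma tau) delta (Mk sigQ delQ L k) P <->
             left_ideal_gen (sigmaR gamma tau) delta (Mk sigQ delQ L k.+1) P)
  <->
  (forall f : {poly R},
     (exists g, Ik sigQ delQ L k g /\ f = sigmaR gamma tau g) <-> Ik sigQ delQ L k.+1 f).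
Proof.
exact: (@main_sec R gamma tau Hgamma delta Hdelta_der sigQ delQ HsigQ_rmorph HsigQ_ext HdelQ_der HdelQ_ext L k).
Qed.
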